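(* Let $a(n,k)$ be the number of non-squashing partitions of $n$ into exactly $k$ parts and $b(n,k)$ the number of non-squashing partitions of $n$ into exactly $k$ distinct parts (with $a(n,k)=0$ for $n<0$). Then $b(n,0)=a(n,0)$ and $b(n,1)=a(n,1)$ for all $n\ge0$, and $b(n,k)=a(n-2^{k-2},k)$ for all $n\ge0$, $k\ge2$. Moreover, for $k\ge2$, $$\sum_{n\ge0}b(n,k)x^n=\frac{x^{3\cdot2^{k-2}}}{\prod_{j=0}^{k-1}\left(1-x^{2^j}\right)},$$ so that for $k\ge2$, $b(n,k)$ equals the number of partitions of $n-3\cdot2^{k-2}$ into powers of $2$ not exceeding $2^{k-1}$.
   Context: A partition $n=p_1+\cdots+p_k$ with $1\le p_1\le\cdots\le p_k$ is non-squashing if $p_1+\cdots+p_j\le p_{j+1}$ for all $1\le j\le k-1$. The empty partition is the unique partition of $0$ and has $0$ parts. *)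

(* Defs.v *)
From mathcomp Require Import all_boot all_order all_algebra.
Set Implicit Arguments. Unset Strict Implicit. Unset Printing Implicit Defensive.

(* A partition is represented as the nondecreasing list of its parts
   [p_1; ...; p_k] with all p_i >= 1. *)
Definition is_partition (s : seq nat) : bool :=
  sorted leq s && all (fun p => 0 < p) s.

(* non-squashing: p_1 + ... + p_j <= p_{j+1} for all 1 <= j <= k-1
   (list index j is p_{j+1}, take j s = [p_1; ...; p_j]). *)
Definition non_squashing (s : seq nat) : bool :=
  is_partition s &&
  all (fun j => sumn (take j s) <= nth 0 s j) (iota 1 (size s).-1).

(* a(n,k): non-squashing partitions of n into exactly k parts.
   Every part of a partition of n is <= n, so parts live in 'I_n.+1. *)
Definition a_ns (n k : nat) : nat :=
  #|[set t : k.-tuple 'I_n.+1 |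
      non_squashing (map val t) && (sumn (map val t) == n)]|.

Definition b_ns (n k : nat) : nat :=
  #|[set t : k.-tuple 'I_n.+1 |
      [&& non_squashing (map val t), uniq (map val t) & sumn (map val t) == n]]|.

Definition is_pow2_le (e : nat) (p : nat) : bool :=
  has (fun i => p == 2 ^ i) (iota 0 e.+1).

(* number of partitions of m into powers of 2 not exceeding 2^e
   (a partition of m has at most m parts, each at most m). *)
Definition pow2_part_count (m e : nat) : nat :=
  \sum_(l < m.+1)
    #|[set t : l.-tuple 'I_m.+1 |
        [&& is_partition (map val t), all (is_pow2_le e) (map val t)
          & sumn (map val t) == m]]|.

(* Main.v *)
Require Import Defs.
From mathcomp Require Import all_boot all_order all_algebra.
From mathcomp Require Import zify.
Import GRing.Theory.
Set Implicit Arguments. Unset Strict Implicit. Unset Printing Implicit Defensive.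

Fixpoint tl (N k : nat) : seq (seq nat) :=
  if k is k'.+1 then [seq rcons s x | s <- tl N k', x <- iota 0 N] else [:: [::]].

Lemma mem_tl N k s : (s \in tl N k) = (size s == k) && all (fun x => x < N) s.
Proof.
elim: k s => [|k IH] s /=.
  by rewrite inE; case: s.
apply/allpairsP/idP.
  case=> [[s' x] /= [Hs Hx ->]].
  move: Hs; rewrite IH => /andP[/eqP Hs Ha].
  rewrite size_rcons Hs eqxx all_rcons Ha andbT /=.
  by rewrite mem_iota in Hx.
case/lastP: s => [|s x]; first by rewrite /=.
rewrite size_rcons eqSS all_rcons => /andP[Hs /andP[Hx Ha]].
exists (s, x); split => //=; first by rewrite IH Hs Ha.
by rewrite mem_iota.
Qed.

Lemma uniq_tl N k : uniq (tl N k).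
Proof.
elim: k => [|k IH] //=.
apply: allpairs_uniq => //; first exact: iota_uniq.
move=> [s x] [t y] _ _ /= E.
exact: rcons_inj E.
Qed.

Lemma count_tlS (P : pred (seq nat)) N k :
  count P (tl N k.+1) = \sum_(s <- tl N k) count (fun x => P (rcons s x)) (iota 0 N).
Proof.
rewrite /= /allpairs_dep count_flatten sumnE !big_map; apply: eq_bigr => s _.
by rewrite count_map.
Qed.

Lemma count_tl_bound (P : pred (seq nat)) N M k :
  (forall s, P s -> all (fun x => x < M) s) -> M <= N ->
  count P (tl N k) = count P (tl M k).
Proof.
move=> HP HMN; rewrite -!size_filter; apply: perm_size.
apply: uniq_perm; try by rewrite filter_uniq // uniq_tl.
move=> s; rewrite !mem_filter !mem_tl.
case Ps: (P s) => //=; have := HP _ Ps => Ha.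
rewrite Ha andbT; case: (size s == k) => //=.
by apply/allP => x Hx; apply: leq_trans HMN; exact: (allP Ha).
Qed.

Lemma card_tl (P : pred (seq nat)) n k :
  #|[set t : k.-tuple 'I_n.+1 | P (map val t)]| = count P (tl n.+1 k).
Proof.
rewrite cardE -size_filter -(size_map (fun t : k.-tuple 'I_n.+1 => map val t)).
apply: perm_size; apply: uniq_perm.
- rewrite map_inj_uniq ?enum_uniq // => t u /= E.
  apply: val_inj; apply: (inj_map val_inj); exact: E.
- by rewrite filter_uniq // uniq_tl.
move=> s; rewrite mem_filter mem_tl; apply/mapP/idP.
  case=> t; rewrite mem_enum inE => Pt ->; rewrite Pt size_map size_tuple eqxx /=.
  by apply/allP => x /mapP[i _ ->].
case/andP=> Ps /andP[/eqP Hs Ha].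
have Hsz : size (map (fun x => inord x : 'I_n.+1) s) == k by rewrite size_map Hs.
have Hm : map val (map (fun x => inord x : 'I_n.+1) s) = s.
  rewrite -map_comp map_id_in // => x Hx /=; rewrite inordK //; exact: (allP Ha).
exists (Tuple Hsz); rewrite ?mem_enum ?inE /= Hm //.
Qed.

Lemma sorted_rconsE (s : seq nat) x :
  sorted leq (rcons s x) = sorted leq s && all (fun y => y <= x) s.
Proof.
elim: s => [|y s IH] //=.
rewrite !(path_sortedE leq_trans) IH all_rcons.
by case: (y <= x); case: (all (leq y) s); case: (sorted leq s); case: (all _ s).
Qed.

Lemma mem_le_sumn (s : seq nat) x : x \in s -> x <= sumn s.
Proof.
elim: s => [|y s IH] //=; rewrite inE => /orP[/eqP->|/IH]; first exact: leq_addr.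
by move=> H; apply: leq_trans H (leq_addl _ _).
Qed.

Lemma sumn_pos (s : seq nat) : 0 < size s -> all (fun p => 0 < p) s -> 0 < sumn s.
Proof. by case: s => [|y s] //= _ /andP[Hy _]; apply: leq_trans Hy (leq_addr _ _). Qed.

Lemma ns_rcons s x : 0 < size s ->
  non_squashing (rcons s x) = non_squashing s && (sumn s <= x).
Proof.
move=> Hs.
have Hi : iota 1 (size s) = rcons (iota 1 (size s).-1) (size s).
  by move: Hs; case: (size s) => // m _ /=; rewrite -cats1 (_ : [:: m.+1] = iota (1 + m) 1) // -iotaD addn1.
rewrite /non_squashing /is_partition size_rcons /= Hi !all_rcons.
have -> : all (fun j => sumn (take j (rcons s x)) <= nth 0 (rcons s x) j)
             (iota 1 (size s).-1) =
          all (fun j => sumn (take j s) <= nth 0 s j) (iota 1 (size s).-1).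
  apply: eq_in_all => j; rewrite mem_iota => /andP[_ Hj].
  have Hj' : j < size s by move: Hs Hj; case: (size s).
  by rewrite nth_rcons Hj' -cats1 takel_cat // ltnW.
rewrite nth_rcons ltnn eqxx -cats1 take_size_cat // cats1.
rewrite sorted_rconsE.
apply/idP/idP.
  by case/andP=> /and3P[/andP[-> _] _ ->] /andP[-> ->].
case/andP=> /andP[/andP[So Hp] A] Hsum; rewrite So Hp A Hsum /= !andbT.
apply/andP; split.
  by apply/allP => y Hy; exact: leq_trans (mem_le_sumn Hy) Hsum.
by apply: leq_trans (sumn_pos Hs Hp) Hsum.
Qed.

Lemma count_iota_eq (P : pred nat) c n :
  count (fun x => P x && (c + x == n)) (iota 0 n.+1) = (c <= n) && P (n - c).
Proof.
rewrite (@eq_count _ _ (fun x => ((c <= n) && P (n - c)) && (x == n - c))); last first.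
  move=> x /=; case: (eqVneq x (n - c)) => [->|Hx].
    have -> : (c + (n - c) == n) = (c <= n) by apply/eqP/idP; lia.
    by rewrite andbT andbC.
  have -> : (c + x == n) = false by apply/eqP; lia.
  by rewrite !andbF.
case: ((c <= n) && P (n - c)) => /=.
  transitivity (count_mem (n - c) (iota 0 n.+1)); first by [].
  by rewrite (count_uniq_mem _ (iota_uniq 0 n.+1)) mem_iota /= ltnS leq_subr.
by rewrite count_pred0.
Qed.

Lemma sum_pick (F : nat -> nat) (c N : nat) :
  \sum_(m < N.+1) (F m * (c == m)) = if c <= N then F c else 0.
Proof.
elim: N => [|N IH].
  rewrite big_ord1 /=; case: (eqVneq c 0) => [->|H]; first by rewrite muln1.
  by rewrite muln0 leqn0 (negbTE H).
rewrite big_ord_recr /= IH.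
case: (eqVneq c N.+1) => [->|Hc]; first by rewrite ltnn leqnn muln1.
rewrite muln0 addn0.
by have -> : (c <= N.+1) = (c <= N) by apply/idP/idP; lia.
Qed.

Lemma sum_count T (P : pred T) l : \sum_(s <- l) (P s : nat) = count P l.
Proof. by elim: l => [|x l IH]; rewrite ?big_nil ?big_cons ?IH. Qed.

Lemma count_split (P : pred (seq nat)) (g : pred nat) N l :
  (forall m, g m -> m <= N) ->
  count (fun s => P s && g (sumn s)) l =
  \sum_(m < N.+1) (g m * count (fun s => P s && (sumn s == m)) l).
Proof.
move=> Hg; elim: l => [|s l IH] /=; first by rewrite big1 // => m _; rewrite muln0.
rewrite IH (eq_bigr _ (fun m _ => mulnDr _ _ _)) big_split /=; congr addn.
case: (P s) => /=; last by rewrite big1 // => m _; rewrite muln0.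
rewrite (sum_pick (fun m => nat_of_bool (g m)) (sumn s) N).
by case Hs: (sumn s <= N) => //; case G: (g (sumn s)) => //; have := Hg _ G; rewrite Hs.
Qed.

Definition QA n := fun s => non_squashing s && (sumn s == n).
Definition QB n := fun s => [&& non_squashing s, uniq s & sumn s == n].

Lemma a_nsE n k : a_ns n k = count (QA n) (tl n.+1 k).
Proof. exact: (card_tl (fun s => non_squashing s && (sumn s == n))). Qed.

Lemma b_nsE n k : b_ns n k = count (QB n) (tl n.+1 k).
Proof. exact: (card_tl (fun s => [&& non_squashing s, uniq s & sumn s == n])). Qed.

Lemma QA_bound m s : QA m s -> all (fun x => x < m.+1) s.
Proof.
case/andP=> _ /eqP Hs; apply/allP => y Hy; rewrite ltnS -Hs; exact: mem_le_sumn.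
Qed.

Lemma QB_bound m s : QB m s -> all (fun x => x < m.+1) s.
Proof.
case/and3P=> _ _ /eqP Hs; apply/allP => y Hy; rewrite ltnS -Hs; exact: mem_le_sumn.
Qed.

Lemma A_rec n k : count (QA n) (tl n.+1 k.+2) =
  \sum_(m < n.+1) ((m.*2 <= n) * count (QA m) (tl m.+1 k.+1)).
Proof.
rewrite count_tlS.
rewrite (@eq_big_seq _ _ _ _ _ _ (fun s => nat_of_bool (non_squashing s && ((sumn s).*2 <= n)))); last first.
  move=> s; rewrite mem_tl => /andP[/eqP Hs _].
  rewrite (@eq_count _ _ (fun x => (non_squashing s && (sumn s <= x)) && (sumn s + x == n))); last first.
    by move=> x; rewrite /QA ns_rcons ?Hs // sumn_rcons.
  rewrite count_iota_eq; case: (non_squashing s); rewrite ?andbF //=.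
  by congr nat_of_bool; apply/idP/idP; [case/andP => H1 H2 | move=> H; apply/andP; split]; lia.
rewrite sum_count (count_split _ (g := fun m => m.*2 <= n) (N := n)); last by move=> m /=; lia.
apply: eq_bigr => m _; congr muln.
apply: count_tl_bound; [exact: QA_bound | by rewrite ltnS -ltnS].
Qed.

Lemma ns_pos s : non_squashing s -> all (fun p => 0 < p) s.
Proof. by case/andP => /andP[_ ->]. Qed.

Lemma lt_sumn (s : seq nat) y : 1 < size s -> all (fun p => 0 < p) s -> y \in s -> y < sumn s.
Proof.
move=> Hs Hp Hy.
rewrite (perm_sumn (perm_to_rem Hy)) /= -[X in X < _]addn0 ltn_add2l.
apply: sumn_pos; first by rewrite size_rem //; move: Hs; case: (size s).
by apply/allP => z Hz; exact: (allP Hp z (mem_rem Hz)).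
Qed.

Lemma B_rec n k : count (QB n) (tl n.+1 k.+3) =
  \sum_(m < n.+1) ((m.*2 <= n) * count (QB m) (tl m.+1 k.+2)).
Proof.
rewrite count_tlS.
rewrite (@eq_big_seq _ _ _ _ _ _ (fun s => nat_of_bool ((non_squashing s && uniq s) && ((sumn s).*2 <= n)))); last first.
  move=> s; rewrite mem_tl => /andP[/eqP Hs _].
  rewrite (@eq_count _ _ (fun x => ((non_squashing s && uniq s) && (sumn s <= x)) && (sumn s + x == n))); last first.
    move=> x; rewrite /QB ns_rcons ?Hs // rcons_uniq sumn_rcons.
    case Hn: (non_squashing s) => //=.
    case Hx: (sumn s <= x); rewrite ?andbF //=.
    have -> : x \notin s.
      apply/negP => Hin; have := lt_sumn (y := x) _ (ns_pos Hn) Hin; rewrite Hs => /(_ isT).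
      by lia.
    by rewrite andbT.
  rewrite count_iota_eq; case: (non_squashing s && uniq s); rewrite ?andbF //=.
  by congr nat_of_bool; apply/idP/idP; [case/andP => H1 H2 | move=> H; apply/andP; split]; lia.
rewrite sum_count (count_split _ (g := fun m => m.*2 <= n) (N := n)); last by move=> m /=; lia.
apply: eq_bigr => m _; congr muln.
rewrite (@eq_count _ _ (QB m)); last by move=> s; rewrite /QB andbA.
apply: count_tl_bound; [exact: QB_bound | by rewrite ltnS -ltnS].
Qed.

Lemma B2 n : count (QB n) (tl n.+1 2) =
  \sum_(m < n.+1) ((m.*2 < n) * count (QA m) (tl m.+1 1)).
Proof.
rewrite count_tlS.
rewrite (@eq_big_seq _ _ _ _ _ _ (fun s => nat_of_bool (non_squashing s && ((sumn s).*2 < n)))); last first.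
  move=> s; rewrite mem_tl => /andP[Hs _].
  case: s Hs => [|p [|? ?]] // _.
  rewrite (@eq_count _ _ (fun x => (non_squashing [::p] && (p < x)) && (p + x == n))); last first.
    move=> x; rewrite /QB ns_rcons // rcons_uniq sumn_rcons /= addn0 inE andbT.
    case: (non_squashing [:: p]) => //=.
    by rewrite andbA; congr andb; rewrite ltn_neqAle andbC eq_sym.
  rewrite count_iota_eq /= addn0; case: (non_squashing [:: p]); rewrite ?andbF //=.
  by congr nat_of_bool; apply/idP/idP; [case/andP => H1 H2 | move=> H; apply/andP; split]; lia.
rewrite sum_count (count_split _ (g := fun m => m.*2 < n) (N := n)); last by move=> m /=; lia.
apply: eq_bigr => m _; congr muln.
apply: count_tl_bound; [exact: QA_bound | by rewrite ltnS -ltnS].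
Qed.

Fixpoint cc (k N : nat) : nat :=
  if k is k'.+1 then \sum_(m < (N %/ 2).+1) cc k' m else 1.

Lemma shift_sum (F : nat -> nat) B N :
  \sum_(m < N.+1) (if B <= m then F (m - B) else 0) =
  if B <= N then \sum_(m < (N - B).+1) F m else 0.
Proof.
case: (leqP B N) => HB; last first.
  by apply: big1 => m _; have := ltn_ord m; case: (leqP B m) => // H1 H2; lia.
rewrite -(big_mkord xpredT (fun m => if B <= m then F (m - B) else 0)) (big_cat_nat _ (n := B)) //=; last by lia.
rewrite [X in X + _]big1_seq ?add0n; last first.
  by move=> i; rewrite mem_index_iota => /andP[_ /andP[_ Hi]]; rewrite leqNgt Hi.
rewrite -{1}[B]add0n big_addn -(big_mkord xpredT F).
have -> : N.+1 - B = (N - B).+1 by lia.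
by apply: eq_bigr => i _; rewrite leq_addl addnK.
Qed.

Lemma cut_sum (F : nat -> nat) T N : T <= N ->
  \sum_(m < N.+1) ((m <= T) * F m) = \sum_(m < T.+1) F m.
Proof.
move=> HT; rewrite -(big_mkord xpredT (fun m => (m <= T) * F m)) -(big_mkord xpredT F) (big_cat_nat _ (n := T.+1)) //=.
rewrite [X in _ + X]big1_seq ?addn0; last first.
  by move=> i; rewrite mem_index_iota => /andP[_ /andP[Hi _]]; rewrite leqNgt Hi.
by apply: eq_big_seq => i; rewrite mem_index_iota => /andP[_ Hi]; rewrite ltnS in Hi; rewrite Hi mul1n.
Qed.

Lemma A_formula n k : count (QA n) (tl n.+1 k.+1) =
  if 2 ^ k <= n then cc k (n - 2 ^ k) else 0.
Proof.
elim: k n => [|k IH] n.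
  rewrite count_tlS big_seq1.
  rewrite (@eq_count _ _ (fun x => (0 < x) && (0 + x == n))); last first.
    by move=> x; rewrite /QA /non_squashing /is_partition /= addn0 !andbT.
  by rewrite count_iota_eq subn0 expn0; case: n.
rewrite A_rec.
rewrite (eq_bigr (fun m : 'I_n.+1 => (m <= n %/ 2) * (if 2 ^ k <= m then cc k (m - 2 ^ k) else 0))); last first.
  move=> m _; rewrite IH; congr muln.
  by congr nat_of_bool; apply/idP/idP; lia.
rewrite (cut_sum (fun m => if 2 ^ k <= m then cc k (m - 2 ^ k) else 0)); last by lia.
rewrite shift_sum /= expnS.
have -> : (2 ^ k <= n %/ 2) = (2 * 2 ^ k <= n) by apply/idP/idP; lia.
case: ifP => // H.
by have -> : (n - 2 * 2 ^ k) %/ 2 = n %/ 2 - 2 ^ k by lia.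
Qed.

Lemma half_sum (F : nat -> nat) N :
  \sum_(m < N.+1) ((m.*2 <= N) * F m) = \sum_(m < (N %/ 2).+1) F m.
Proof.
rewrite -(cut_sum F (N := N)); last by lia.
apply: eq_bigr => m _; congr muln; congr nat_of_bool; apply/idP/idP; lia.
Qed.

Lemma B_formula n k : count (QB n) (tl n.+1 k.+2) =
  if 2 ^ k <= n then count (QA (n - 2 ^ k)) (tl (n - 2 ^ k).+1 k.+2) else 0.
Proof.
elim: k n => [|k IH] n.
  rewrite B2 expn0; case: n => [|n].
    by rewrite big_ord1.
  rewrite ltn0Sn subn1 -pred_Sn (A_rec n 0) (half_sum (fun m => count (QA m) (tl m.+1 1))).
  rewrite -(cut_sum (fun m => count (QA m) (tl m.+1 1)) (N := n.+1)); last by lia.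
  apply: eq_bigr => m _; congr muln; congr nat_of_bool; apply/idP/idP; lia.
rewrite B_rec (half_sum (fun m => count (QB m) (tl m.+1 k.+2))).
rewrite (eq_bigr (fun m : 'I_(n %/ 2).+1 => if 2 ^ k <= m then count (QA (m - 2 ^ k)) (tl (m - 2 ^ k).+1 k.+2) else 0)); last first.
  by move=> m _; rewrite IH.
rewrite (shift_sum (fun m => count (QA m) (tl m.+1 k.+2))) expnS.
have -> : (2 ^ k <= n %/ 2) = (2 * 2 ^ k <= n) by apply/idP/idP; lia.
case: ifP => // H.
rewrite A_rec (half_sum (fun m => count (QA m) (tl m.+1 k.+2))).
by have -> : (n - 2 * 2 ^ k) %/ 2 = n %/ 2 - 2 ^ k by lia.
Qed.

Lemma cc_coin e N : cc e.+1 N =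
  cc e N + (if 2 ^ e.+1 <= N then cc e.+1 (N - 2 ^ e.+1) else 0).
Proof.
elim: e N => [|e IH] N.
  rewrite /= !sum_nat_const !card_ord !muln1 expn1.
  by case: ifP => H; lia.
have -> : cc e.+2 N = \sum_(m < (N %/ 2).+1) cc e.+1 m by [].
under eq_bigr => m _ do rewrite IH.
rewrite big_split /=.
congr addn.
rewrite (shift_sum (fun m => cc e.+1 m)) [2 ^ e.+2]expnS.
have -> : (2 ^ e.+1 <= N %/ 2) = (2 * 2 ^ e.+1 <= N) by apply/idP/idP; lia.
case: ifP => // H /=.
by have -> : (N - 2 * 2 ^ e.+1) %/ 2 = N %/ 2 - 2 ^ e.+1 by lia.
Qed.

Lemma cc_H e m : cc e m =
  (m == 0) + \sum_(i < e.+1) (if 2 ^ i <= m then cc i (m - 2 ^ i) else 0).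
Proof.
elim: e => [|e IH].
  by rewrite big_ord1 /= expn0; case: m.
by rewrite big_ord_recr /= addnA -IH -cc_coin.
Qed.

Definition QP m e := fun s => [&& is_partition s, all (is_pow2_le e) s & sumn s == m].

Lemma pow2P e p : reflect (exists2 j, j <= e & p = 2 ^ j) (is_pow2_le e p).
Proof.
apply: (iffP hasP) => [[j Hj /eqP ->]|[j Hj ->]]; exists j => //; rewrite mem_iota in Hj *; lia.
Qed.

Lemma key_pow2 s i e : i <= e ->
  is_partition (rcons s (2 ^ i)) && all (is_pow2_le e) s =
  is_partition s && all (is_pow2_le i) s.
Proof.
move=> Hie.
have E : all (fun y => y <= 2 ^ i) s && all (is_pow2_le e) s = all (is_pow2_le i) s.
  rewrite -all_predI; apply: eq_all => y /=; apply/andP/pow2P.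
    case=> Hy /pow2P[j Hj Ey]; exists j => //.
    by rewrite Ey leq_exp2l in Hy.
  case=> j Hj ->; split; first by rewrite leq_exp2l.
  by apply/pow2P; exists j => //; lia.
rewrite /is_partition sorted_rconsE all_rcons expn_gt0 /= -E.
apply/idP/idP.
  by case/andP=> /andP[/andP[-> ->] ->] ->.
by case/andP=> /andP[-> ->] /andP[-> ->].
Qed.

Lemma count_QP_rcons m e s :
  count (fun x => QP m e (rcons s x)) (iota 0 m.+1) =
  \sum_(i < e.+1) ((2 ^ i <= m) * QP (m - 2 ^ i) i s).
Proof.
rewrite (@eq_count _ _ (fun x => (is_pow2_le e x && is_partition (rcons s x) && all (is_pow2_le e) s) && (sumn s + x == m))); last first.
  move=> x; rewrite /QP all_rcons sumn_rcons.
  by case: (is_pow2_le e x); case: (is_partition _); case: (all _ s).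
rewrite count_iota_eq.
case: (leqP (sumn s) m) => Hc /=; last first.
  apply/esym/big1 => i _; rewrite /QP.
  have -> : (sumn s == m - 2 ^ i) = false by apply/eqP; lia.
  by rewrite !andbF muln0.
case: (pow2P e (m - sumn s)) => [[j Hj Ej]|Hn] /=.
  rewrite Ej key_pow2 //.
  rewrite (eq_bigr (fun i : 'I_e.+1 => (is_partition s && all (is_pow2_le i) s) * (j == i))); last first.
    move=> i _; rewrite /QP; case: (eqVneq j i) => [<-|Hji].
      have -> : 2 ^ j <= m by lia.
      have -> : sumn s == m - 2 ^ j by apply/eqP; lia.
      by rewrite andbT mul1n muln1.
    rewrite muln0; case: (leqP (2 ^ i) m) => Hi //=.
    case: (eqVneq (sumn s) (m - 2 ^ i)) => [Es|]; last by rewrite !andbF.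
    have : 2 ^ i = 2 ^ j by lia.
    by move/(expnI (ltnSn 1)) => Eij; rewrite Eij eqxx in Hji.
  by rewrite (sum_pick (fun i => nat_of_bool (is_partition s && all (is_pow2_le i) s)) j e) Hj.
apply/esym/big1 => i _; rewrite /QP.
case: (leqP (2 ^ i) m) => Hi //=.
case: (eqVneq (sumn s) (m - 2 ^ i)) => [Es|]; last by rewrite !andbF.
by exfalso; apply: Hn; exists i; [rewrite -ltnS | lia].
Qed.

Lemma QP_bound m e s : QP m e s -> all (fun x => x < m.+1) s.
Proof.
case/and3P=> _ _ /eqP Hs; apply/allP => y Hy; rewrite ltnS -Hs; exact: mem_le_sumn.
Qed.

Lemma QP_rec m e l : count (QP m e) (tl m.+1 l.+1) =
  \sum_(i < e.+1) ((2 ^ i <= m) * count (QP (m - 2 ^ i) i) (tl (m - 2 ^ i).+1 l)).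
Proof.
rewrite count_tlS.
under eq_bigr => s _ do rewrite count_QP_rcons.
rewrite exchange_big /=; apply: eq_bigr => i _.
rewrite -big_distrr /= sum_count; congr muln.
apply: count_tl_bound; [exact: QP_bound | by rewrite ltnS leq_subr].
Qed.

Lemma size_le_sumn (s : seq nat) : all (fun p => 0 < p) s -> size s <= sumn s.
Proof. elim: s => [|y s IH] //= /andP[Hy Hs]; have := IH Hs; lia. Qed.

Lemma QP_zero M i N l : M < l -> count (QP M i) (tl N l) = 0.
Proof.
move=> Hl; rewrite (@eq_in_count _ _ pred0) ?count_pred0 //.
move=> s; rewrite mem_tl => /andP[/eqP Hs _] /=; apply/negP.
case/and3P=> /andP[_ Hp] _ /eqP Hsum; have := size_le_sumn Hp.
rewrite Hsum; move: Hs Hl; rewrite /= => -> ; lia.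
Qed.

Lemma sum_trunc (F : nat -> nat) M m : M < m -> (forall l, M < l -> F l = 0) ->
  \sum_(l < m) F l = \sum_(l < M.+1) F l.
Proof.
move=> HM HF; rewrite -(big_mkord xpredT F) -(big_mkord xpredT F) (big_cat_nat _ (n := M.+1)) //=.
rewrite [X in _ + X]big1_seq ?addn0 // => i; rewrite mem_index_iota => /andP[_ /andP[Hi _]].
exact: HF.
Qed.

Lemma PP m e : \sum_(l < m.+1) count (QP m e) (tl m.+1 l) = cc e m.
Proof.
elim/ltn_ind: m e => m IH e.
rewrite big_ord_recl cc_H; congr addn.
  by rewrite /= /QP /= addn0 eq_sym.
under eq_bigr => l _ do rewrite /= QP_rec.
rewrite exchange_big /=; apply: eq_bigr => i _.
rewrite -big_distrr /=.
case: (leqP (2 ^ i) m) => Hi; last by rewrite mul0n.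
rewrite mul1n (@sum_trunc (fun l => count (QP (m - 2 ^ i) i) (tl (m - 2 ^ i).+1 l)) (m - 2 ^ i)).
- apply: IH; have := expn_gt0 2 i; lia.
- have := expn_gt0 2 i; lia.
- by move=> l Hl; apply: QP_zero.
Qed.

Lemma Bcc n k : b_ns n k.+2 = if 3 * 2 ^ k <= n then cc k.+1 (n - 3 * 2 ^ k) else 0.
Proof.
rewrite b_nsE B_formula.
case: (leqP (2 ^ k) n) => H1; last by have -> : (3 * 2 ^ k <= n) = false by apply/negbTE; rewrite -ltnNge; lia.
rewrite A_formula expnS.
have -> : (2 * 2 ^ k <= n - 2 ^ k) = (3 * 2 ^ k <= n) by apply/idP/idP; lia.
case: ifP => // H2.
by have -> : n - 2 ^ k - 2 * 2 ^ k = n - 3 * 2 ^ k by lia.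
Qed.

Lemma PPC M e : pow2_part_count M e = cc e M.
Proof.
rewrite /pow2_part_count -PP; apply: eq_bigr => l _.
exact: (card_tl (fun s => [&& is_partition s, all (is_pow2_le e) s & sumn s == M])).
Qed.

Local Open Scope ring_scope.

Lemma agree_mul (p q r : {poly int}) n :
  (forall i, (i <= n)%N -> p`_i = q`_i) -> forall i, (i <= n)%N -> (p * r)`_i = (q * r)`_i.
Proof.
move=> H i Hi; rewrite !coefM; apply: eq_bigr => j _; rewrite H //.
by apply: leq_trans Hi; rewrite -ltnS.
Qed.

Lemma gf_step e n i : (i <= n)%N ->
  ((\poly_(m < n.+1) ((cc e.+1 m)%:R : int)) * (1 - 'X^(2 ^ e.+1)))`_i =
  (\poly_(m < n.+1) ((cc e m)%:R : int))`_i.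
Proof.
move=> Hi; rewrite mulrBr mulr1 coefB coefMXn !coef_poly ltnS Hi.
rewrite cc_coin natrD.
case: (ltnP i (2 ^ e.+1)) => H.
  by rewrite addr0 subr0.
rewrite ltnS (_ : (i - 2 ^ e.+1 <= n)%N); last by lia.
by rewrite addrK.
Qed.

Lemma gf_cc e n i : (i <= n)%N ->
  ((\poly_(m < n.+1) ((cc e m)%:R : int)) * \prod_(j < e.+1) (1 - 'X^(2 ^ j)))`_i =
  (i == 0%N)%:R.
Proof.
elim: e n i => [|e IH] n i Hi.
  rewrite big_ord1 expn0 expr1 mulrBr mulr1 coefB coefMX !coef_poly ltnS Hi /=.
  by case: i Hi => [|i] Hi /=; rewrite ?subr0 // ltnS ltnW // subrr.
rewrite (big_ord_recr e.+1) mulrA mulrAC.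
rewrite (@agree_mul _ (\poly_(m < n.+1) ((cc e m)%:R : int)) _ n) //.
  exact: IH.
by move=> j Hj; rewrite gf_step.
Qed.

Local Close Scope ring_scope.

Theorem theorem4 :
  (forall n : nat, b_ns n 0 = a_ns n 0 /\ b_ns n 1 = a_ns n 1) /\
  (forall n k : nat, 2 <= k ->
     b_ns n k = (if 2 ^ (k - 2) <= n then a_ns (n - 2 ^ (k - 2)) k else 0)) /\
  (* generating function identity, as the formal power series identity
     (sum_n b(n,k) x^n) * prod_{j<k} (1 - x^(2^j)) = x^(3*2^(k-2)),
     checked coefficientwise *)
  (forall k : nat, 2 <= k -> forall n : nat,
     (((\sum_(m < n.+1) ((b_ns m k)%:R : int) *: 'X^m)
        * \prod_(j < k) (1 - 'X^(2 ^ j)) : {poly int})`_n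
      = ('X^(3 * 2 ^ (k - 2)) : {poly int})`_n)%R) /\
  (forall n k : nat, 2 <= k ->
     b_ns n k = (if 3 * 2 ^ (k - 2) <= n
                 then pow2_part_count (n - 3 * 2 ^ (k - 2)) (k - 1) else 0)).
Proof.
split; [|split; [|split]].
- move=> n; rewrite !b_nsE !a_nsE; split; first by rewrite /QB /QA /=.
  apply: eq_in_count => s; rewrite mem_tl => /andP[Hs _].
  by case: s Hs => [|x [|? ?]] //= _; rewrite /QB /QA /=.
- move=> n [|[|k]] // _; rewrite !subSS subn0.
  by rewrite b_nsE B_formula a_nsE.
- move=> [|[|k]] // _ n; rewrite !subSS subn0.
  under eq_bigr => m _ do rewrite Bcc.
  set s := 3 * 2 ^ k.
  rewrite -(poly_def n.+1 (fun m => ((if s <= m then cc k.+1 (m - s) else 0)%:R : int))).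
  rewrite coefXn.
  case: (leqP s n) => Hs; last first.
    rewrite (_ : (\poly_(m < n.+1) _)%R = 0%R) ?mul0r ?coef0; last first.
      apply/polyP => i; rewrite coef_poly coef0.
      case: (ltnP i n.+1) => Hi //; rewrite ifN //; rewrite -ltnNge; lia.
    by rewrite (_ : (n == s) = false) //; apply/negbTE; rewrite neq_ltn Hs.
  have E : (\poly_(m < n.+1) ((if (s <= m)%N then cc k.+1 (m - s) else 0)%:R : int) =
           'X^s * \poly_(m < (n - s).+1) ((cc k.+1 m)%:R : int))%R.
    apply/polyP => i; rewrite coefXnM !coef_poly.
    case: (ltnP i s) => H1.
      by rewrite if_same.
    rewrite (_ : (i - s < (n - s).+1) = (i < n.+1)) //.
    by apply/idP/idP; lia.
  rewrite E -GRing.mulrA coefXnM ifN; last by rewrite -leqNgt.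
  rewrite (@gf_cc k.+1 (n - s) (n - s) (leqnn (n - s))).
  by rewrite subn_eq0 eqn_leq Hs andbT.
- move=> n [|[|k]] // _; rewrite !subSS !subn0 Bcc.
  by case: ifP => // _; rewrite PPC.
Qed.
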